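(* The following are equivalent for an integral domain $D$: (1) for every nonzero nonunit $x$ of $D$, $xD$ is a $\ast$-product of finitely many $\ast$-super homog ideals of type $1$; (2) $D$ is a $\ast$-GKD.
   Context: $\ast$ is a star operation on $D$ of finite character. A $\ast$-ideal is a nonzero fractional ideal $I$ with $I^\ast=I$; of finite type if $I=J^\ast$ for some nonzero finitely generated $J$. A maximal $\ast$-ideal is an integral $\ast$-ideal maximal among proper integral $\ast$-ideals. $I$ is $\ast$-invertible if $(II^{-1})^\ast=D$. A $\ast$-homog ideal is a proper integral $\ast$-ideal $I$ of finite type such that $(A+B)^\ast\neq D$ for every pair $A,B$ of proper integral $\ast$-ideals of finite type containing $I$; it lies in a unique maximal $\ast$-ideal $M(I)$. A $\ast$-homog ideal $I$ is of type $1$ if for every $x\in M(I)\setminus\{0\}$ there is $n\ge1$ with $x^nD_{M(I)}\cap D\subseteq I$. A $\ast$-super homog ideal is a $\ast$-homog ideal $I$ such that every $\ast$-ideal of finite type containing $I$ is $\ast$-invertible; it is of type $1$ if it is also a $\ast$-homog ideal of type $1$. $D$ is a $\ast$-IRKT if $D_P$ is a valuation domain for every maximal $\ast$-ideal $P$, $D=\bigcap_P D_P$ over the maximal $\ast$-ideals with the intersection locally finite, and no two distinct maximal $\ast$-ideals contain a common nonzero prime ideal. $D$ is a $\ast$-GKD if it is a $\ast$-IRKT all of whose maximal $\ast$-ideals have height $1$. *)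

(* Defs.v *)
(* An integral domain D is represented as a subring of a
   field K which is its field of fractions; fractional ideals are subsets
   (K -> Prop) of K. *)
From HB Require Import structures.
From mathcomp Require Import all_boot all_order all_algebra.
Set Implicit Arguments.
Unset Strict Implicit.
Unset Printing Implicit Defensive.
Import Order.TTheory GRing.Theory Num.Theory.
Local Open Scope ring_scope.

Section StarDefs.
Variable K : fieldType.
Variable D : K -> Prop.

Definition subset_K (A B : K -> Prop) : Prop := forall x, A x -> B x.

Definition is_subring : Prop :=
  [/\ D 0, D 1, (forall a b, D a -> D b -> D (a - b))
    & (forall a b, D a -> D b -> D (a * b))].

Definition is_frac_field : Prop :=
  forall x : K, exists a b, [/\ D a, D b, b != 0 & x = a / b].

Definition is_Dsubmodule (I : K -> Prop) : Prop :=
  [/\ I 0, (forall x y, I x -> I y -> I (x + y))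
    & (forall a x, D a -> I x -> I (a * x))].

Definition frac_ideal (I : K -> Prop) : Prop :=
  [/\ is_Dsubmodule I, (exists x, x != 0 /\ I x)
    & (exists d, [/\ D d, d != 0 & forall x, I x -> D (d * x)])].

Fixpoint gen (s : seq K) (x : K) : Prop :=
  match s with
  | [::] => x = 0
  | a :: s' => exists d y, [/\ D d, gen s' y & x = d * a + y]
  end.

Definition fin_gen (I : K -> Prop) : Prop := exists s : seq K, I = gen s.

Definition mulset (x : K) (I : K -> Prop) : K -> Prop :=
  fun y => exists z, I z /\ y = x * z.

Definition principal (x : K) : K -> Prop := fun y => exists d, D d /\ y = d * x.

Definition sumI (A B : K -> Prop) : K -> Prop :=
  fun x => exists a b, [/\ A a, B b & x = a + b].

Definition mulI (A B : K -> Prop) : K -> Prop :=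
  fun x => exists s : seq (K * K),
    (forall p, p \in s -> A p.1 /\ B p.2) /\ x = \sum_(p <- s) p.1 * p.2.

Definition inv_ideal (I : K -> Prop) : K -> Prop :=
  fun x => forall y, I y -> D (x * y).

(* star operation on D (values outside F(D) are irrelevant) *)
Definition is_star_op (star : (K -> Prop) -> (K -> Prop)) : Prop :=
  (forall I, frac_ideal I -> frac_ideal (star I)) /\
  [/\ star D = D,
      (forall x I, x != 0 -> frac_ideal I -> star (mulset x I) = mulset x (star I)),
      (forall I, frac_ideal I -> subset_K I (star I)),
      (forall I J, frac_ideal I -> frac_ideal J -> subset_K I J ->
                   subset_K (star I) (star J))
    & (forall I, frac_ideal I -> star (star I) = star I)].

Definition finite_character (star : (K -> Prop) -> (K -> Prop)) : Prop :=
  forall I, frac_ideal I ->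
    star I = (fun x => exists J, [/\ frac_ideal J, fin_gen J, subset_K J I & star J x]).

Variable star : (K -> Prop) -> (K -> Prop).

Definition star_ideal (I : K -> Prop) : Prop := frac_ideal I /\ star I = I.

Definition integral (I : K -> Prop) : Prop := subset_K I D.

Definition proper_integral_star_ideal (I : K -> Prop) : Prop :=
  [/\ star_ideal I, integral I & I <> D].

Definition finite_type (I : K -> Prop) : Prop :=
  star_ideal I /\ exists J, [/\ frac_ideal J, fin_gen J & I = star J].

Definition max_star_ideal (M : K -> Prop) : Prop :=
  proper_integral_star_ideal M /\
  forall N, proper_integral_star_ideal N -> subset_K M N -> N = M.

Definition star_invertible (I : K -> Prop) : Prop :=
  star (mulI I (inv_ideal I)) = D.

Definition loc (P : K -> Prop) : K -> Prop :=
  fun x => exists a s, [/\ D a, D s, ~ P s & x = a / s].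

Definition star_homog (I : K -> Prop) : Prop :=
  [/\ proper_integral_star_ideal I, finite_type I &
      forall A B, proper_integral_star_ideal A -> finite_type A ->
                  proper_integral_star_ideal B -> finite_type B ->
                  subset_K I A -> subset_K I B -> star (sumI A B) <> D].

(* type 1; M(I) is the unique maximal star-ideal containing I *)
Definition star_homog_type1 (I : K -> Prop) : Prop :=
  star_homog I /\
  forall M, max_star_ideal M -> subset_K I M ->
    forall x, M x -> x != 0 -> exists n : nat, (1 <= n)%N /\
      forall y, D y -> (exists z, loc M z /\ y = x ^+ n * z) -> I y.

Definition star_super_homog (I : K -> Prop) : Prop :=
  star_homog I /\
  forall J, finite_type J -> subset_K I J -> star_invertible J.

Definition star_super_homog_type1 (I : K -> Prop) : Prop :=
  star_super_homog I /\ star_homog_type1 I.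

Definition prodI (s : seq (K -> Prop)) : K -> Prop := foldr mulI D s.

Definition prime_ideal (Q : K -> Prop) : Prop :=
  [/\ is_Dsubmodule Q, integral Q, ~ Q 1 &
      forall a b, D a -> D b -> Q (a * b) -> Q a \/ Q b].

Definition nonzero_set (Q : K -> Prop) : Prop := exists x, x != 0 /\ Q x.

Definition star_IRKT : Prop :=
  [/\ (forall P, max_star_ideal P ->
         forall x : K, x != 0 -> loc P x \/ loc P x^-1),
      (forall x, D x <-> forall P, max_star_ideal P -> loc P x),
      (forall x, D x -> x != 0 -> exists (n : nat) (f : nat -> K -> Prop),
         forall P, max_star_ideal P -> P x -> exists i, (i < n)%N /\ P = f i)
    & (forall P Q, max_star_ideal P -> max_star_ideal Q -> P <> Q ->
         forall R, prime_ideal R -> nonzero_set R ->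
           ~ (subset_K R P /\ subset_K R Q))].

(* height 1: every nonzero prime contained in P equals P *)
Definition star_GKD : Prop :=
  star_IRKT /\
  forall P, max_star_ideal P ->
    forall Q, prime_ideal Q -> nonzero_set Q -> subset_K Q P -> Q = P.

End StarDefs.

(* Main.v *)
Require Import Defs.
From HB Require Import structures.
From mathcomp Require Import all_boot all_order all_algebra.
From mathcomp Require Import ring zify.
From mathcomp Require classical_sets.
From Stdlib Require Import FunctionalExtensionality PropExtensionality ClassicalEpsilon Classical.
Import GRing.Theory.
Local Open Scope ring_scope.
Set Implicit Arguments.
Unset Strict Implicit.

Lemma seteq (T : Type) (A B : T -> Prop) : (forall x, A x <-> B x) -> A = B.
Proof. move=> h; apply: functional_extensionality => x; apply: propositional_extensionality; exact: h. Qed.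

Section Q5.
Variable K : fieldType.
Variable D : K -> Prop.
Variable S : (K -> Prop) -> (K -> Prop).
Hypothesis HD : is_subring D.
Hypothesis HF : is_frac_field D.
Hypothesis HS : is_star_op D S.
Hypothesis HFC : finite_character D S.

Lemma D0 : D 0. Proof. by case: HD. Qed.
Lemma D1 : D 1. Proof. by case: HD. Qed.
Lemma DB a b : D a -> D b -> D (a - b). Proof. by case: HD => _ _ h _; apply: h. Qed.
Lemma DM a b : D a -> D b -> D (a * b). Proof. by case: HD => _ _ _ h; apply: h. Qed.
Lemma DN a : D a -> D (- a). Proof. move=> h; rewrite -sub0r; exact: DB D0 h. Qed.
Lemma DD a b : D a -> D b -> D (a + b).
Proof. move=> ha hb; rewrite -(opprK b); apply: DB ha (DN hb). Qed.
Lemma DX a n : D a -> D (a ^+ n).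
Proof. move=> ha; elim: n => [|n IH]; first by rewrite expr0; exact: D1. by rewrite exprS; apply: DM. Qed.

Notation sm := (is_Dsubmodule D).
Notation frac := (frac_ideal D).

Lemma sm0 A : sm A -> A 0. Proof. by case. Qed.
Lemma smD A x y : sm A -> A x -> A y -> A (x + y). Proof. by case=> _ h _; apply: h. Qed.
Lemma smM A a x : sm A -> D a -> A x -> A (a * x). Proof. by case=> _ _ h; apply: h. Qed.
Lemma smN A x : sm A -> A x -> A (- x).
Proof. move=> h hx; rewrite -mulN1r; apply: smM => //; exact: DN D1. Qed.
Lemma smB A x y : sm A -> A x -> A y -> A (x - y).
Proof. move=> h hx hy; apply: smD => //; exact: smN. Qed.
Lemma smMr A a x : sm A -> D a -> A x -> A (x * a). Proof. by move=> h ha hx; rewrite mulrC; apply: smM. Qed.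

Lemma smDD : sm D. Proof. split; [exact: D0|exact: DD|exact: DM]. Qed.

Lemma frac_int A : sm A -> subset_K A D -> (exists x, x != 0 /\ A x) -> frac A.
Proof. move=> h1 h2 h3; split=> //; exists 1; split; [exact: D1|exact: oner_neq0|by move=> x /h2; rewrite mul1r]. Qed.

Lemma fracD : frac D.
Proof. apply: frac_int; [exact: smDD|by []|]. exists 1; split; [exact: oner_neq0|exact: D1]. Qed.

Lemma frac_sm A : frac A -> sm A. Proof. by case. Qed.

Lemma S_frac A : frac A -> frac (S A). Proof. by case: HS => h _; apply: h. Qed.
Lemma S_D : S D = D. Proof. by case: HS => _ []. Qed.
Lemma S_mul x A : x != 0 -> frac A -> S (mulset x A) = mulset x (S A).
Proof. by case: HS => _ [] _ h _ _ _; apply: h. Qed.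
Lemma S_ext A : frac A -> subset_K A (S A). Proof. by case: HS => _ [] _ _ h _ _; apply: h. Qed.
Lemma S_mono A B : frac A -> frac B -> subset_K A B -> subset_K (S A) (S B).
Proof. by case: HS => _ [] _ _ _ h _; apply: h. Qed.
Lemma S_idem A : frac A -> S (S A) = S A. Proof. by case: HS => _ [] _ _ _ _ h; apply: h. Qed.
Lemma S_sm A : frac A -> sm (S A). Proof. by move=> h; case: (S_frac h). Qed.
Lemma S_int A : frac A -> subset_K A D -> subset_K (S A) D.
Proof. move=> h hs; rewrite -S_D; apply: S_mono => //; exact: fracD. Qed.

Lemma frac_mulset g A : g != 0 -> frac A ->
  (exists d, [/\ D d, d != 0 & forall y, A y -> D (d * (g * y))]) -> frac (mulset g A).
Proof.
move=> g0 [hA [x [x0 Ax]] _] hb; split.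
- case: hA => h0 hp hm; split.
  + by exists 0; split=> //; rewrite mulr0.
  + move=> _ _ [a [Aa ->]] [b [Ab ->]]; exists (a + b); split; [exact: hp|by rewrite mulrDr].
  + move=> c _ dc [a [Aa ->]]; exists (c * a); split; [exact: hm|by rewrite mulrCA].
- by exists (g * x); split; [rewrite mulf_neq0|exists x].
- case: hb => d [Dd d0 hd]; exists d; split=> // _ [a [Aa ->]]; exact: hd.
Qed.

Lemma S_gmul g A C : g != 0 -> frac A -> frac C -> S C = C ->
  (forall y, A y -> C (g * y)) -> forall y, S A y -> C (g * y).
Proof.
move=> g0 fA fC SC h y Sy.
have fM : frac (mulset g A).
  apply: frac_mulset => //; case: fC => _ _ [d [Dd d0 hd]]; exists d; split=> // z Az; exact/hd/h.
have : mulset g (S A) (g * y) by exists y.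
rewrite -S_mul // => hy; rewrite -SC; apply: S_mono hy => //.
by move=> _ [z [Az ->]]; apply: h.
Qed.


Notation maxs := (max_star_ideal D S).

Lemma notD_one A : sm A -> subset_K A D -> A <> D -> ~ A 1.
Proof.
move=> hA hs hne A1; apply: hne; apply: seteq => x; split; first exact: hs.
by move=> Dx; rewrite -(mulr1 x); apply: smM.
Qed.

Lemma one_D A : sm A -> subset_K A D -> A 1 -> A = D.
Proof. move=> hA hs A1; apply: seteq => x; split; first exact: hs.
by move=> Dx; rewrite -(mulr1 x); apply: smM. Qed.

Lemma pis_of A : frac A -> S A = A -> subset_K A D -> ~ A 1 ->
  proper_integral_star_ideal D S A.
Proof. by move=> fA SA hs n1; split=> //; move=> e; apply: n1; rewrite e; exact: D1. Qed.

Lemma pis_props A : proper_integral_star_ideal D S A ->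
  [/\ frac A, S A = A, subset_K A D & ~ A 1].
Proof.
case=> [[fA SA] hs hne]; split=> //; apply: notD_one => //; exact: frac_sm.
Qed.

Lemma max_props P : maxs P -> [/\ frac P, S P = P, subset_K P D & ~ P 1].
Proof. by case=> /pis_props. Qed.

Lemma max_sm P : maxs P -> sm P. Proof. by case/max_props => /frac_sm. Qed.

Lemma max_max P N : maxs P -> frac N -> S N = N -> subset_K N D -> ~ N 1 ->
  subset_K P N -> N = P.
Proof. by case=> _ h fN SN hs n1 sPN; apply: h => //; apply: pis_of. Qed.

Lemma sumI_sm A B : sm A -> sm B -> sm (sumI A B).
Proof.
move=> hA hB; split.
- by exists 0, 0; split; [exact: sm0|exact: sm0|rewrite addr0].
- move=> _ _ [a [b [Aa Bb ->]]] [a' [b' [Aa' Bb' ->]]].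
  exists (a + a'), (b + b'); split; [exact: smD|exact: smD|].
  by rewrite addrACA.
- move=> d _ Dd [a [b [Aa Bb ->]]]; exists (d * a), (d * b); split;
    [exact: smM|exact: smM|by rewrite mulrDr].
Qed.

Lemma sumI_int A B : subset_K A D -> subset_K B D -> subset_K (sumI A B) D.
Proof. by move=> hA hB _ [a [b [/hA Aa /hB Bb ->]]]; apply: DD. Qed.

Lemma sumI_l A B : sm B -> subset_K A (sumI A B).
Proof. by move=> hB a Aa; exists a, 0; split=> //; [exact: sm0|rewrite addr0]. Qed.
Lemma sumI_r A B : sm A -> subset_K B (sumI A B).
Proof. by move=> hA b Bb; exists 0, b; split=> //; [exact: sm0|rewrite add0r]. Qed.

Lemma nz_frac A : frac A -> exists x, x != 0 /\ A x. Proof. by case. Qed.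

Lemma sumI_frac A B : frac A -> sm B -> subset_K A D -> subset_K B D -> frac (sumI A B).
Proof.
move=> fA hB hA' hB'; apply: frac_int.
- by apply: sumI_sm => //; exact: frac_sm.
- exact: sumI_int.
- by case: (nz_frac fA) => x [x0 Ax]; exists x; split=> //; apply: sumI_l.
Qed.

Lemma pr_sm x : sm (principal D x).
Proof.
split.
- by exists 0; split; [exact: D0|rewrite mul0r].
- by move=> _ _ [a [Da ->]] [b [Db ->]]; exists (a + b); split; [exact: DD|rewrite mulrDl].
- by move=> c _ Dc [a [Da ->]]; exists (c * a); split; [exact: DM|rewrite mulrA].
Qed.
Lemma pr_self x : principal D x x. Proof. by exists 1; split; [exact: D1|rewrite mul1r]. Qed.
Lemma pr_int x : D x -> subset_K (principal D x) D.
Proof. by move=> Dx _ [a [Da ->]]; apply: DM. Qed.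
Lemma pr_frac x : D x -> x != 0 -> frac (principal D x).
Proof. move=> Dx x0; apply: frac_int; [exact: pr_sm|exact: pr_int|exists x; split=> //; exact: pr_self]. Qed.
Lemma pr_S x : D x -> x != 0 -> S (principal D x) = principal D x.
Proof.
move=> Dx x0.
have -> : principal D x = mulset x D.
  apply: seteq => y; split.
  - by case=> d [Dd ->]; exists d; split=> //; rewrite mulrC.
  - by case=> d [Dd ->]; exists d; split=> //; rewrite mulrC.
rewrite S_mul //; [by rewrite S_D|exact: fracD].
Qed.

Lemma max_prime P a b : maxs P -> D a -> D b -> P (a * b) -> P a \/ P b.
Proof.
move=> mP Da Db Pab; case: (classic (P a)) => Pa; [by left|right].
have [fP SP sP n1] := max_props mP.
have smP := frac_sm fP.
have fN : frac (sumI P (principal D a)).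
  by apply: sumI_frac => //; [exact: pr_sm|exact: pr_int].
case: (classic (S (sumI P (principal D a)) 1)) => N1.
- case: (eqVneq b 0) => [->|b0]; first exact: sm0.
  rewrite -(mulr1 b); apply: (S_gmul b0 fN fP SP) N1.
  move=> _ [p [_ [Pp [d [Dd ->]] ->]]].
  rewrite mulrDr; apply: smD => //; first by apply: smM.
  by rewrite mulrCA mulrC; apply: smMr => //; rewrite mulrC.
- exfalso; apply: Pa.
  have e : S (sumI P (principal D a)) = P.
    apply: max_max => //.
    + exact: S_frac.
    + exact: S_idem.
    + apply: S_int => //; apply: sumI_int => //; exact: pr_int.
    + by move=> y Py; apply: S_ext => //; apply: sumI_l => //; exact: pr_sm.
  rewrite -e; apply: S_ext => //; apply: sumI_r => //; exact: pr_self.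
Qed.

Lemma max_prime_ideal P : maxs P -> prime_ideal D P.
Proof.
move=> mP; have [fP SP sP n1] := max_props mP.
split=> //; [exact: frac_sm|move=> a b Da Db; exact: max_prime].
Qed.

Lemma prime_props Q : prime_ideal D Q -> [/\ sm Q, subset_K Q D & ~ Q 1].
Proof. by case. Qed.

Lemma prime_mul Q a b : prime_ideal D Q -> D a -> D b -> Q (a * b) -> Q a \/ Q b.
Proof. by case=> _ _ _ h; apply: h. Qed.

Lemma prime_notmul Q a b : prime_ideal D Q -> D a -> D b -> ~ Q a -> ~ Q b -> ~ Q (a * b).
Proof. by move=> pQ Da Db na nb /(prime_mul pQ Da Db) []. Qed.

Lemma prime_pow Q a n : prime_ideal D Q -> D a -> ~ Q a -> ~ Q (a ^+ n).
Proof.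
move=> pQ Da na; elim: n => [|n IH]; first by rewrite expr0; case: pQ.
by rewrite exprS; apply: prime_notmul => //; apply: DX.
Qed.

Lemma prime_pow1 Q a n : prime_ideal D Q -> D a -> (1 <= n)%N -> Q (a ^+ n) -> Q a.
Proof.
move=> pQ Da n1 Qa; apply: NNPP => na.
case: n n1 Qa => // n _; exact: (@prime_pow Q a n.+1 pQ Da na).
Qed.

Lemma prime0 Q : prime_ideal D Q -> Q 0. Proof. by case=> /sm0. Qed.

Lemma max_notsub P Q : maxs P -> maxs Q -> P <> Q -> exists c, P c /\ ~ Q c.
Proof.
move=> mP mQ ne; apply: NNPP => h; apply: ne.
have [fQ SQ sQ n1] := max_props mQ.
apply: esym; apply: max_max => //.
by move=> c Pc; apply: NNPP => nQ; apply: h; exists c.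
Qed.


Lemma gen_sm s : sm (gen D s).
Proof.
elim: s => [|a s [h0 hp hm]] /=.
- split=> //; first by move=> x y -> ->; rewrite addr0.
  by move=> c x _ ->; rewrite mulr0.
- split.
  + by exists 0, 0; split=> //; [exact: D0|rewrite mul0r addr0].
  + move=> _ _ [d [y [Dd gy ->]]] [d' [y' [Dd' gy' ->]]].
    exists (d + d'), (y + y'); split; [exact: DD|exact: hp|].
    by rewrite mulrDl addrACA.
  + move=> c _ Dc [d [y [Dd gy ->]]]; exists (c * d), (c * y); split;
      [exact: DM|exact: hm|by rewrite mulrDr mulrA].
Qed.

Lemma gen_mem s a : a \in s -> gen D s a.
Proof.
elim: s => [|b s IH] //=; rewrite inE => /orP [/eqP ->|h].
- by exists 1, 0; split; [exact: D1|exact: sm0 (gen_sm s)|rewrite mul1r addr0].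
- by exists 0, a; split; [exact: D0|exact: IH|rewrite mul0r add0r].
Qed.

Lemma gen_sub s C : sm C -> (forall a, a \in s -> C a) -> subset_K (gen D s) C.
Proof.
move=> hC; elim: s => [|b s IH] h x /=; first by move=> ->; exact: sm0.
case=> d [y [Dd gy ->]]; apply: smD => //.
- by apply: smM => //; apply: h; rewrite inE eqxx.
- by apply: IH => // a ha; apply: h; rewrite inE ha orbT.
Qed.

Lemma gen_int s : (forall a, a \in s -> D a) -> subset_K (gen D s) D.
Proof. by move=> h; apply: gen_sub => //; exact: smDD. Qed.

Lemma ZornMax A : frac A -> S A = A -> subset_K A D -> ~ A 1 ->
  exists P, maxs P /\ subset_K A P.
Proof.
move=> fA SA sA nA.
pose good (X : K -> Prop) := [/\ subset_K A X, frac X, S X = X, subset_K X D & ~ X 1].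
pose PP : classical_sets.set (classical_sets.set K) :=
  fun X => X = (fun _ => False) \/ good X.
have hA : good A by split.
have [x0 [x00 Ax0]] := nz_frac fA.
have [M [PM Mmax]] : exists M, PP M /\ (forall B, classical_sets.proper M B -> ~ PP B).
  apply: classical_sets.Zorn_bigcup => F FP Ftot.
  set U := classical_sets.bigcup F id.
  have Ue : forall t, U t <-> exists2 X, F X & X t by [].
  case: (classic (exists2 X, F X & good X)) => [[X0 FX0 gX0]|nog]; last first.
    left; apply: seteq => t; split=> // /Ue [X FX Xt].
    case: (FP X FX) => [eX|gX]; first by rewrite eX in Xt.
    by apply: nog; exists X.
  have goodof : forall X t, F X -> X t -> good X.
    move=> X t FX Xt; case: (FP X FX) => // eX; by rewrite eX in Xt.
  have big : forall s : seq K, (forall a, a \in s -> U a) ->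
      exists2 X, F X & (good X /\ forall a, a \in s -> X a).
    elim=> [|a s IH] hs; first by exists X0.
    have [X FX [gX hX]] : exists2 X, F X & (good X /\ forall a, a \in s -> X a).
      by apply: IH => b hb; apply: hs; rewrite inE hb orbT.
    have [Y FY Ya] : exists2 Y, F Y & Y a by apply/Ue/hs; rewrite inE eqxx.
    case: (Ftot X Y FX FY) => [XY|YX].
    - exists Y => //; split; first exact: goodof FY Ya.
      by move=> b; rewrite in_cons => /orP [/eqP ->|/hX /XY].
    - exists X => //; split=> // b; rewrite in_cons => /orP [/eqP ->|/hX //].
      exact: YX.
  have smU : sm U.
    split.
    - by apply/Ue; exists X0 => //; case: gX0 => _ /frac_sm /sm0.
    - move=> x y Ux Uy.
      have [X FX [gX hX]] : exists2 X, F X & (good X /\ forall a, a \in [:: x; y] -> X a).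
        by apply: big => a; rewrite !inE => /orP [/eqP ->|/eqP ->].
      apply/Ue; exists X => //; case: gX => _ /frac_sm hs _ _ _.
      by apply: smD => //; apply: hX; rewrite !inE eqxx ?orbT.
    - move=> a x Da /Ue [X FX Xx]; apply/Ue; exists X => //.
      by case: (goodof _ _ FX Xx) => _ /frac_sm hs _ _ _; apply: smM.
  have sUD : subset_K U D by move=> t /Ue [X FX Xt]; case: (goodof _ _ FX Xt) => _ _ _ /(_ t Xt).
  have fU : frac U.
    apply: frac_int => //; exists x0; split=> //; apply/Ue; exists X0 => //.
    by case: gX0 => /(_ x0 Ax0).
  right; split=> //.
  - by move=> t At; apply/Ue; exists X0 => //; case: gX0 => /(_ t At).
  - apply: seteq => z; split; last exact: S_ext.
    rewrite HFC // => -[J [fJ [s eJ] sJU SJz]].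
    have [X FX [[_ fX SX _ _] hX]] : exists2 X, F X & (good X /\ forall a, a \in s -> X a).
      by apply: big => a ha; apply: sJU; rewrite eJ; exact: gen_mem.
    apply/Ue; exists X => //; rewrite -SX; apply: (S_mono fJ fX) SJz.
    by rewrite eJ; apply: gen_sub => //; exact: frac_sm.
  - by move=> /Ue [X FX X1]; case: (goodof _ _ FX X1) => _ _ _ _ /(_ X1).
case: PM => [eM|gM].
- exfalso; apply: (Mmax A); last by right.
  split; first by rewrite eM.
  by move=> /(_ x0 Ax0); rewrite eM.
- case: gM => sAM fM SM sM nM; exists M; split=> //; split; first exact: pis_of.
  move=> N pN sMN; have [fN SN sN nN] := pis_props pN.
  apply: seteq => t; split; last exact: sMN.
  apply: NNPP => /(fun h => h) hn.
  case: (classic (subset_K N M)) => [NM|nNM]; first exact: hn (fun Nt => NM t Nt).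
  apply: (Mmax N); [split=> //|right; split=> //].
  by move=> a /sAM /sMN.
Qed.


Lemma mulI_sub A B C : sm C -> (forall a b, A a -> B b -> C (a * b)) ->
  subset_K (mulI A B) C.
Proof.
move=> hC hab _ [s [hs ->]]; elim: s hs => [|p s IH] hs; first by rewrite big_nil; exact: sm0.
rewrite big_cons; apply: smD => //.
- by have [] := hs p (mem_head _ _); apply: hab.
- by apply: IH => q hq; apply: hs; rewrite in_cons hq orbT.
Qed.

Lemma mulI_el (A B : K -> Prop) a b : A a -> B b -> mulI A B (a * b).
Proof.
move=> Aa Bb; exists [:: (a, b)]; split; last by rewrite big_seq1.
by move=> p; rewrite inE => /eqP ->.
Qed.

Lemma mulI_sm A B : sm A -> sm (mulI A B).
Proof.
move=> hA; split.
- by exists [::]; split=> //; rewrite big_nil.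
- move=> _ _ [s [hs ->]] [t [ht ->]]; exists (s ++ t); split; last by rewrite big_cat.
  by move=> p; rewrite mem_cat => /orP [/hs|/ht].
- move=> d _ Dd [s [hs ->]]; exists [seq (d * p.1, p.2) | p <- s]; split.
  + move=> q /mapP [p ps ->] /=; have [h1 h2] := hs p ps; split=> //; exact: smM.
  + by rewrite big_map mulr_sumr; apply: eq_bigr => p _; rewrite mulrA.
Qed.

Lemma mulI_int A B : subset_K A D -> subset_K B D -> subset_K (mulI A B) D.
Proof. by move=> hA hB; apply: mulI_sub; [exact: smDD|move=> a b /hA ha /hB hb; exact: DM]. Qed.

Lemma mulI_frac A B : frac A -> frac B -> subset_K A D -> subset_K B D -> frac (mulI A B).
Proof.
move=> fA fB sA sB; apply: frac_int; [exact/mulI_sm/frac_sm|exact: mulI_int|].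
have [a [a0 Aa]] := nz_frac fA; have [b [b0 Bb]] := nz_frac fB.
by exists (a * b); split; [exact: mulf_neq0|exact: mulI_el].
Qed.

Lemma mulI_notsub A B Q : sm Q -> ~ subset_K (mulI A B) Q ->
  exists a b, [/\ A a, B b & ~ Q (a * b)].
Proof.
move=> hQ h; apply: NNPP => hn; apply: h; apply: mulI_sub => // a b Aa Bb.
by apply: NNPP => nQ; apply: hn; exists a, b.
Qed.

Lemma prodI_props s : (forall i, (i < size s)%N -> frac (nth D s i) /\ subset_K (nth D s i) D) ->
  [/\ sm (prodI D s), subset_K (prodI D s) D & frac (prodI D s)].
Proof.
elim: s => [|I s IH] h /=; first by split=> //; [exact: smDD|exact: fracD].
have [fI sI] := h 0%N isT.
have [h1 h2 h3] : [/\ sm (prodI D s), subset_K (prodI D s) D & frac (prodI D s)].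
  by apply: IH => i hi; apply: (h i.+1).
split; [exact/mulI_sm/frac_sm|exact: mulI_int|exact: mulI_frac].
Qed.

Lemma prodI_int s : (forall i, (i < size s)%N -> subset_K (nth D s i) D) ->
  subset_K (prodI D s) D.
Proof.
elim: s => [|I s IH] h //=; apply: mulI_int; first exact: (h 0%N).
by apply: IH => i hi; apply: (h i.+1).
Qed.

Lemma prime_prodI Q s : prime_ideal D Q ->
  (forall i, (i < size s)%N -> subset_K (nth D s i) D) ->
  subset_K (prodI D s) Q -> exists2 i, (i < size s)%N & subset_K (nth D s i) Q.
Proof.
move=> pQ; have [smQ sQ nQ] := prime_props pQ.
elim: s => [|I s IH] h /=; first by move=> /(_ 1 D1).
move=> hsub; case: (classic (subset_K I Q)) => [IQ|nIQ]; first by exists 0%N.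
have [y Iy nQy] : exists2 y, I y & ~ Q y.
  by apply: NNPP => hn; apply: nIQ => y Iy; apply: NNPP => nq; apply: hn; exists y.
have [i hi hQ] : exists2 i, (i < size s)%N & subset_K (nth D s i) Q.
  apply: IH; first by move=> i hi; apply: (h i.+1).
  move=> z pz; have Dz : D z.
    by apply: prodI_int pz => i hi; apply: (h i.+1).
  have : Q (y * z) by apply: hsub; exact: mulI_el.
  case/(prime_mul pQ (h 0%N isT y Iy) Dz) => //.
by exists i.+1.
Qed.

Section Loc.
Variable P : K -> Prop.
Hypothesis pP : prime_ideal D P.

Lemma nP0 s : ~ P s -> s != 0.
Proof. by move=> ns; apply/eqP => e; apply: ns; rewrite e; exact: prime0. Qed.

Lemma loc_D x : D x -> loc D P x.
Proof. by move=> Dx; exists x, 1; split=> //; [exact: D1|case: pP|rewrite divr1]. Qed.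

Lemma loc_mul x y : loc D P x -> loc D P y -> loc D P (x * y).
Proof.
move=> [a [s [Da Ds ns ->]]] [b [t [Db Dt nt ->]]].
exists (a * b), (s * t); split; [exact: DM|exact: DM|exact: prime_notmul|].
by rewrite mulf_div.
Qed.

Lemma loc_add x y : loc D P x -> loc D P y -> loc D P (x + y).
Proof.
move=> [a [s [Da Ds ns ->]]] [b [t [Db Dt nt ->]]].
exists (a * t + b * s), (s * t); split; [apply: DD; exact: DM|exact: DM|exact: prime_notmul|].
have s0 := nP0 ns; have t0 := nP0 nt; field; by rewrite s0 t0.
Qed.

Lemma loc_opp x : loc D P x -> loc D P (- x).
Proof.
move=> [a [s [Da Ds ns ->]]]; exists (- a), s; split=> //; [exact: DN|by rewrite mulNr].
Qed.

Lemma loc_inv a : D a -> ~ P a -> loc D P a^-1.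
Proof. by move=> Da na; exists 1, a; split=> //; [exact: D1|rewrite div1r]. Qed.

Lemma loc_X x n : loc D P x -> loc D P (x ^+ n).
Proof.
move=> hx; elim: n => [|n IH]; first by rewrite expr0; apply: loc_D; exact: D1.
by rewrite exprS; apply: loc_mul.
Qed.

Definition lm x y := exists t, loc D P t /\ y = x * t.

Lemma lm_refl x : lm x x.
Proof. by exists 1; split; [apply: loc_D; exact: D1|rewrite mulr1]. Qed.

Lemma lm_trans x y z : lm x y -> lm y z -> lm x z.
Proof.
move=> [t [lt ->]] [u [lu ->]]; exists (t * u); split; [exact: loc_mul|by rewrite mulrA].
Qed.

Lemma lm_mulr x y c : loc D P c -> lm x y -> lm x (y * c).
Proof. by move=> lc [t [lt ->]]; exists (t * c); split; [exact: loc_mul|rewrite mulrA]. Qed.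

Lemma lm_mull x y c : lm x y -> lm (c * x) (c * y).
Proof. by move=> [t [lt ->]]; exists t; split=> //; rewrite mulrA. Qed.

Lemma lm_add x y z : lm x y -> lm x z -> lm x (y + z).
Proof. by move=> [t [lt ->]] [u [lu ->]]; exists (t + u); split; [exact: loc_add|rewrite mulrDr]. Qed.

Lemma lm_D x y : D y -> lm x (x * y).
Proof. by move=> Dy; exists y; split=> //; exact: loc_D. Qed.

Lemma lm_0 x : lm x 0. Proof. by exists 0; split; [apply: loc_D; exact: D0|rewrite mulr0]. Qed.

Lemma lm_1 y : loc D P y -> lm 1 y. Proof. by move=> ly; exists y; split=> //; rewrite mul1r. Qed.

Lemma lm_den x y : lm x y -> D y -> exists s, [/\ D s, ~ P s & exists a, D a /\ s * y = x * a].
Proof.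
move=> [t [[a [s [Da Ds ns ->]]] ->]] _; exists s; split=> //; exists a; split=> //.
have s0 := nP0 ns; field; by rewrite s0.
Qed.

End Loc.

Lemma LG F z : frac F ->
  (forall Q, maxs Q -> exists s, [/\ D s, ~ Q s & F (s * z)]) -> S F z.
Proof.
move=> fF hQ.
have fSF := S_frac fF; have smSF := frac_sm fSF; have SSF := S_idem fF.
case: (eqVneq z 0) => [->|z0]; first exact: sm0.
pose A := fun d => D d /\ S F (d * z).
have smA : sm A.
  split.
  - by split; [exact: D0|rewrite mul0r; exact: sm0].
  - by move=> x y [Dx hx] [Dy hy]; split; [exact: DD|rewrite mulrDl; exact: smD].
  - by move=> a x Da [Dx hx]; split; [exact: DM|rewrite -mulrA; exact: smM].
have fA : frac A.
  apply: frac_int => //; first by move=> d [].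
  have [f0 [f00 Ff0]] := nz_frac fF.
  have [p [q [Dp Dq q0 ef]]] := HF f0.
  have [a [b [Da Db b0 ez]]] := HF z.
  have p0 : p != 0 by apply: contraNneq f00 => p0; rewrite ef p0 mul0r.
  exists (p * b); split; first exact: mulf_neq0.
  split; first exact: DM.
  have -> : p * b * z = (q * a) * f0.
    rewrite ez ef; field; by rewrite q0 b0.
  by apply: S_ext => //; apply: smM (frac_sm fF) _ Ff0; exact: DM.
have SA : S A = A.
  apply: seteq => d; split; last exact: S_ext.
  move=> Sd; split; first by apply: (S_int fA) Sd => y [].
  rewrite mulrC; apply: (S_gmul z0 fA fSF SSF) Sd.
  by move=> y [_ hy]; rewrite mulrC.
case: (classic (A 1)) => [[_]|nA]; first by rewrite mul1r.
have [Q [mQ sAQ]] := ZornMax fA SA (fun d => @proj1 _ _) nA.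
have [s [Ds ns Fs]] := hQ Q mQ.
by exfalso; apply: ns; apply: sAQ; split=> //; apply: S_ext.
Qed.


Lemma gen_frac l : (forall a, a \in l -> D a) -> (exists y, y != 0 /\ gen D l y) -> frac (gen D l).
Proof. by move=> h hn; apply: frac_int => //; [exact: gen_sm|exact: gen_int]. Qed.

Lemma ft_gen l : frac (gen D l) -> finite_type D S (S (gen D l)).
Proof.
move=> f; split; first by split; [exact: S_frac|exact: S_idem].
by exists (gen D l); split=> //; exists l.
Qed.

Lemma pis_ft_gen l P : maxs P -> (forall a, a \in l -> P a) ->
  (exists y, y != 0 /\ gen D l y) ->
  [/\ proper_integral_star_ideal D S (S (gen D l)), finite_type D S (S (gen D l))
    & subset_K (S (gen D l)) P].
Proof.
move=> mP hl hn; have [fP SP sP nP] := max_props mP.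
have f : frac (gen D l) by apply: gen_frac => // a /hl /sP.
have sub : subset_K (S (gen D l)) P.
  by rewrite -SP; apply: S_mono => //; apply: gen_sub => //; exact: frac_sm.
split=> //; last exact: ft_gen.
apply: pis_of; [exact: S_frac|exact: S_idem| |by move/sub].
by move=> y /sub /sP.
Qed.

Lemma split_gen (P Q : K -> Prop) s : sm P -> sm Q -> (forall a, a \in s -> sumI P Q a) ->
  exists ps qs, [/\ forall a, a \in ps -> P a, forall a, a \in qs -> Q a &
    subset_K (gen D s) (sumI (gen D ps) (gen D qs))].
Proof.
move=> hP hQ; elim: s => [|a s IH] hs.
- exists [::], [::]; split=> // x /= ->; exists 0, 0; split=> //; by rewrite addr0.
- have [ps [qs [h1 h2 h3]]] : exists ps qs, [/\ forall a, a \in ps -> P a, forall a, a \in qs -> Q a &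
    subset_K (gen D s) (sumI (gen D ps) (gen D qs))].
    by apply: IH => b hb; apply: hs; rewrite in_cons hb orbT.
  have [p [q [Pp Qq ea]]] : sumI P Q a by apply: hs; rewrite in_cons eqxx.
  exists (p :: ps), (q :: qs); split.
  + by move=> b; rewrite in_cons => /orP [/eqP ->|/h1].
  + by move=> b; rewrite in_cons => /orP [/eqP ->|/h2].
  + move=> x /= [d [y [Dd gy ->]]]; have [u [v [gu gv ->]]] := h3 y gy.
    exists (d * p + u), (d * q + v); split.
    * by exists d, u.
    * by exists d, v.
    * by rewrite ea mulrDr addrACA.
Qed.

Lemma homog_unique I P Q : star_homog D S I -> maxs P -> maxs Q ->
  subset_K I P -> subset_K I Q -> P = Q.
Proof.
move=> [pI [_ [J [fJ [i0 eJ] eI]]] hh] mP mQ IP IQ.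
apply: NNPP => ne.
have [fP SP sP nP] := max_props mP; have [fQ SQ sQ nQ] := max_props mQ.
have smP := frac_sm fP; have smQ := frac_sm fQ.
have fPQ : frac (sumI P Q) by apply: sumI_frac.
have N1 : S (sumI P Q) 1.
  apply: NNPP => n1.
  have e : S (sumI P Q) = P.
    apply: max_max => //; [exact: S_frac|exact: S_idem| |].
    + by apply: S_int => //; apply: sumI_int.
    + by move=> y Py; apply: S_ext => //; apply: sumI_l.
  apply: ne; apply: max_max mQ fP SP sP nP _.
  by move=> y Qy; rewrite -e; apply: S_ext => //; apply: sumI_r.
move: N1; rewrite HFC // => -[J' [fJ' [s eJ'] sJ' SJ'1]].
have [ps [qs [hps hqs hsub]]] : exists ps qs, [/\ forall a, a \in ps -> P a, forall a, a \in qs -> Q a &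
    subset_K (gen D s) (sumI (gen D ps) (gen D qs))].
  by apply: split_gen => // a ha; apply: sJ'; rewrite eJ'; exact: gen_mem.
subst J; have fi0 := fJ.
have i0I : forall a, a \in i0 -> I a by move=> a ha; rewrite eI; apply: S_ext => //; exact: gen_mem.
have [y [y0 gy]] := nz_frac fi0.
have gsub : forall l, subset_K (gen D i0) (gen D (i0 ++ l)).
  by move=> l; apply: gen_sub; [exact: gen_sm|move=> a ha; apply: gen_mem; rewrite mem_cat ha].
have gsub2 : forall l, subset_K (gen D l) (gen D (i0 ++ l)).
  by move=> l; apply: gen_sub; [exact: gen_sm|move=> a ha; apply: gen_mem; rewrite mem_cat ha orbT].
have memcat : forall (X : K -> Prop) l, subset_K I X -> (forall a, a \in l -> X a) ->
    forall a, a \in i0 ++ l -> X a.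
  by move=> X l IX hl a; rewrite mem_cat => /orP [/i0I /IX|/hl].
have fcat : forall l, (forall a, a \in l -> D a) -> frac (gen D (i0 ++ l)).
  move=> l hl; apply: gen_frac; last by exists y; split=> //; apply: gsub.
  apply: memcat => // a Ia; case: (pis_props pI) => _ _ sI _; exact: sI.
have [pA fA sAP] := pis_ft_gen mP (memcat P ps IP hps) (ex_intro _ y (conj y0 (gsub ps y gy))).
have [pB fB sBQ] := pis_ft_gen mQ (memcat Q qs IQ hqs) (ex_intro _ y (conj y0 (gsub qs y gy))).
have fps := fcat ps (fun a ha => sP _ (hps a ha)).
have fqs := fcat qs (fun a ha => sQ _ (hqs a ha)).
have IA : forall l, frac (gen D (i0 ++ l)) -> subset_K I (S (gen D (i0 ++ l))).
  by move=> l fl; rewrite eI; apply: S_mono => //; exact: gsub.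
apply: (hh _ _ pA fA pB fB (IA ps fps) (IA qs fqs)).
have [fA' _ sA' _] := pis_props pA; have [fB' _ sB' _] := pis_props pB.
have fAB : frac (sumI (S (gen D (i0 ++ ps))) (S (gen D (i0 ++ qs)))).
  by apply: sumI_frac => //; exact: frac_sm.
apply: one_D; [exact/S_sm|apply: S_int => //; exact: sumI_int|].
apply: (S_mono fJ' fAB) SJ'1; rewrite eJ' => x /hsub [u [v [gu gv ->]]].
exists u, v; split=> //.
- by apply: S_ext fps _ _; apply: gsub2.
- by apply: S_ext fqs _ _; apply: gsub2.
Qed.


Lemma sm_pre g : sm (fun t => D (g * t)).
Proof.
split; first by rewrite mulr0; exact: D0.
- by move=> x y hx hy; rewrite mulrDr; apply: DD.
- by move=> a x Da hx; rewrite mulrCA; apply: DM.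
Qed.

Lemma inv_pair_gen F P : frac F -> star_invertible D S (S F) -> maxs P ->
  exists f g, [/\ F f, forall y, S F y -> D (g * y), D (f * g) & ~ P (f * g)].
Proof.
move=> fF inv mP; have [fP SP sP nP] := max_props mP; have smP := frac_sm fP.
have fSF := S_frac fF.
have fM : frac (mulI (S F) (inv_ideal D (S F))).
  apply: frac_int.
  - exact/mulI_sm/frac_sm.
  - apply: mulI_sub; first exact: smDD.
    by move=> a b Sa hb; rewrite mulrC; apply: hb.
  - have [a [a0 Aa]] := nz_frac fSF.
    case: fSF => _ _ [d [Dd d0 hd]]; exists (a * d); split; first exact: mulf_neq0.
    by apply: mulI_el.
have : ~ subset_K (mulI (S F) (inv_ideal D (S F))) P.
  move=> hs; apply: nP; rewrite -SP; apply: (S_mono fM fP hs).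
  by rewrite inv; exact: D1.
case/(mulI_notsub smP) => f' [g [Sf' ig nfg]].
have g0 : g != 0 by apply/eqP => e; apply: nfg; rewrite e mulr0; exact: sm0.
have [f Ff nf] : exists2 f, F f & ~ P (g * f).
  apply: NNPP => hn; apply: nfg; rewrite mulrC.
  have hFP : forall y, F y -> P (g * y).
    by move=> y Fy; apply: NNPP => np; apply: hn; exists y.
  exact: (S_gmul g0 fF fP SP hFP).
exists f, g; split.
- exact: Ff.
- by move=> y Sy; apply: ig.
- by rewrite mulrC; apply: ig; apply: S_ext.
- by rewrite mulrC.
Qed.

Lemma LE F P f g : frac F -> maxs P -> F f -> (forall y, S F y -> D (g * y)) ->
  D (f * g) -> ~ P (f * g) -> forall y, S F y -> lm P f y.
Proof.
move=> fF mP Ff hg Dfg nfg y Sy; have pP := max_prime_ideal mP.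
have fg0 := nP0 pP nfg.
exists ((g * y) / (f * g)); split.
- by apply: loc_mul => //; [apply: loc_D => //; exact: hg|exact: loc_inv].
- have f0 : f != 0 by apply: contraNneq fg0 => ->; rewrite mul0r.
  have g0 : g != 0 by apply: contraNneq fg0 => ->; rewrite mulr0.
  field; by rewrite f0 g0.
Qed.

Lemma loc_split P z : prime_ideal D P -> loc D P z ->
  (z != 0 /\ loc D P z^-1) \/ (1 - z != 0 /\ loc D P (1 - z)^-1).
Proof.
move=> pP [a [s [Da Ds ns ->]]]; have s0 := nP0 pP ns.
case: (classic (P a)) => Pa.
- right; have nsa : ~ P (s - a).
    move=> h; apply: ns; have -> : s = (s - a) + a by rewrite subrK.
    by case: pP => sm _ _ _; apply: smD.
  have sa0 := nP0 pP nsa.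
  have -> : 1 - a / s = (s - a) / s by field.
  split; first by rewrite mulf_neq0 ?invr_eq0.
  rewrite invf_div; exists s, (s - a); split=> //; exact: DB.
- left; have a0 := nP0 pP Pa; split; first by rewrite mulf_neq0 ?invr_eq0.
  by rewrite invf_div; exists s, a.
Qed.

Lemma comp_loc P f : prime_ideal D P -> (forall w, D w -> lm P w f \/ lm P f w) ->
  forall v, loc D P v -> lm P v f \/ lm P f v.
Proof.
move=> pP h v [w [s [Dw Ds ns ->]]]; have s0 := nP0 pP ns.
case: (h w Dw) => [[t [lt ->]]|[t [lt ->]]].
- left; exists (s * t); split; [apply: loc_mul => //; exact: loc_D|field; by rewrite s0].
- right; exists (t / s); split; [apply: loc_mul => //; exact: loc_inv|by rewrite mulrA].
Qed.

Lemma comp_factor I P : star_super_homog D S I -> maxs P ->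
  exists f g, [/\ I f, forall y, I y -> D (g * y), D (f * g), ~ P (f * g)
    & forall v, loc D P v -> lm P v f \/ lm P f v].
Proof.
move=> [[pI [_ [J0 [fJ0 [s0 eJ0] eI]]] _] hsup] mP.
have pP := max_prime_ideal mP; have [fI SI sI nI] := pis_props pI.
subst J0.
have [f [g [Ff hg Dfg nfg]]] := inv_pair_gen fJ0 (hsup _ (ft_gen fJ0) (fun y h => eq_ind _ (fun X => X y) h _ eI)) mP.
rewrite -eI in hg.
have If : I f by rewrite eI; apply: S_ext.
exists f, g; split=> //.
apply: comp_loc => // w Dw.
have s0I : forall a, a \in s0 -> I a by move=> a ha; rewrite eI; apply: S_ext => //; exact: gen_mem.
have [y [y0 gy]] := nz_frac fJ0.
have gsub : subset_K (gen D s0) (gen D (w :: s0)).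
  by apply: gen_sub; [exact: gen_sm|move=> a ha; apply: gen_mem; rewrite in_cons ha orbT].
have fW : frac (gen D (w :: s0)).
  apply: gen_frac; last by exists y; split=> //; apply: gsub.
  by move=> a; rewrite in_cons => /orP [/eqP ->|/s0I /sI].
have IJ : subset_K I (S (gen D (w :: s0))) by rewrite eI; apply: S_mono.
have [f' [g' [Ff' hg' Df'g' nf'g']]] := inv_pair_gen fW (hsup _ (ft_gen fW) IJ) mP.
have LEJ := LE fW mP Ff' hg' Df'g' nf'g'.
have LEI : forall y, I y -> lm P f y.
  move=> z Iz; apply: (LE fJ0 mP Ff _ Dfg nfg); rewrite -eI //.
have [u [lu fu]] : lm P f' f by apply: LEJ; exact: IJ.
have [t [lt wt]] : lm P f' w by apply: LEJ; apply: S_ext => //; apply: gen_mem; rewrite in_cons eqxx.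
case: Ff' => d [z [Dd gz ef']].
have [beta [lb zb]] : lm P f z by apply: LEI; rewrite eI; apply: S_ext.
have key : f' * (1 - u * beta) = d * w.
  by rewrite mulrBr mulr1 mulrA -fu -zb ef' addrK.
case: (loc_split pP (loc_mul pP lu lb)) => [[ub0 lub]|[ub0 lub]].
- right; have u0 : u != 0 by apply: contraNneq ub0 => ->; rewrite mul0r.
  exists (beta * (u * beta)^-1 * t); split.
  + by apply: loc_mul => //; apply: loc_mul.
  + rewrite wt fu; have b0 : beta != 0 by apply: contraNneq ub0 => ->; rewrite mulr0.
    field; by rewrite u0 b0.
- left; exists (d * (1 - u * beta)^-1 * u); split.
  + by apply: loc_mul => //; apply: loc_mul => //; apply: loc_D.
  + rewrite fu; have -> : f' = d * w / (1 - u * beta).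
      by rewrite -key; field.
    by rewrite !mulrA [w * d]mulrC.
Qed.


Lemma prod_comp s P : (forall i, (i < size s)%N -> star_super_homog D S (nth D s i)) -> maxs P ->
  exists F G, [/\ prodI D s F, forall y, prodI D s y -> D (G * y), D (F * G), ~ P (F * G)
    & forall v, loc D P v -> lm P v F \/ lm P F v].
Proof.
move=> hs mP; have pP := max_prime_ideal mP; have [fP SP sP nP] := max_props mP.
elim: s hs => [|I s IH] hs /=.
- exists 1, 1; split; [exact: D1|by move=> y Dy; rewrite mul1r|by rewrite mulr1; exact: D1|by rewrite mulr1|].
  by move=> v lv; right; apply: lm_1.
have [F [G [pF hG DFG nFG cF]]] := IH (fun i hi => hs i.+1 hi).
have [f [g [If hg Dfg nfg cf]]] := comp_factor (hs 0%N isT) mP.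
have [[pI _ _] _] := hs 0%N isT; have [fI SI sI nI] := pis_props pI.
have DF : D F by apply: prodI_int pF => i hi; have [[/pis_props [] _ _ ? _ _ _] _] := hs i.+1 hi.
exists (f * F), (g * G); split.
- exact: mulI_el.
- apply: mulI_sub; first exact: sm_pre.
  by move=> a b Ia pb; rewrite mulrACA; apply: DM; [exact: hg|exact: hG].
- by rewrite mulrACA; apply: DM.
- by rewrite mulrACA; apply: prime_notmul => //; apply: sI.
- move=> v lv; case: (cf v lv) => [[t [lt ->]]|[v' [lv' ->]]].
  + left; exists (t * F); split; [apply: loc_mul => //; exact: loc_D|by rewrite mulrA].
  + case: (cF v' lv') => [[t [lt ->]]|[t [lt ->]]].
    * by left; exists t; split=> //; rewrite mulrA.
    * by right; exists t; split=> //; rewrite mulrA.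
Qed.

Definition cond1 := forall x : K, D x -> x != 0 -> ~ D x^-1 ->
      exists s : seq (K -> Prop),
        (forall i : nat, (i < size s)%N -> star_super_homog_type1 D S (nth D s i)) /\
        principal D x = S (prodI D s).

Lemma fac_props s : (forall i : nat, (i < size s)%N -> star_super_homog_type1 D S (nth D s i)) ->
  [/\ forall i, (i < size s)%N -> star_super_homog D S (nth D s i),
      forall i, (i < size s)%N -> frac (nth D s i) /\ subset_K (nth D s i) D
    & [/\ sm (prodI D s), subset_K (prodI D s) D & frac (prodI D s)]].
Proof.
move=> h.
have h2 : forall i, (i < size s)%N -> frac (nth D s i) /\ subset_K (nth D s i) D.
  by move=> i hi; have [[[/pis_props [] ? _ ? _ _ _] _] _] := h i hi.
split=> //; first by move=> i hi; case: (h i hi).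
exact: prodI_props.
Qed.

Lemma val_of_cond1 : cond1 -> forall P, maxs P -> forall x : K, x != 0 -> loc D P x \/ loc D P x^-1.
Proof.
move=> h1 P mP x x0; have pP := max_prime_ideal mP.
have [a [b [Da Db b0 ex]]] := HF x.
have a0 : a != 0 by apply: contraNneq x0 => e; rewrite ex e mul0r.
case: (classic (D a^-1)) => ia.
  right; rewrite ex invf_div; apply: loc_D => //; exact: DM.
have [s [hs es]] := h1 a Da a0 ia.
have [hs1 hs2 [smp sp fp]] := fac_props hs.
have [F [G [pF hG DFG nFG cF]]] := prod_comp hs1 mP.
have aF : lm P a F.
  have : principal D a F by rewrite es; apply: S_ext.
  by case=> d [Dd ->]; rewrite mulrC; apply: lm_D.
have Fa : lm P F a.
  have G0 : G != 0 by apply/eqP => e; apply: nFG; rewrite e mulr0; exact: prime0 pP.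
  apply: (LE fp mP pF _ DFG nFG); first exact: (S_gmul G0 fp fracD S_D hG).
  by rewrite -es; exact: pr_self.
case: (cF b (loc_D pP Db)) => [bF|Fb].
- left; have [t [lt et]] := lm_trans pP bF Fa.
  by rewrite ex et; have -> : b * t / b = t by field. 
- right; have [t [lt et]] := lm_trans pP aF Fb.
  by rewrite ex invf_div et; have -> : a * t / a = t by field.
Qed.


Lemma D_iff_loc x : D x <-> (forall P, maxs P -> loc D P x).
Proof.
split; first by move=> Dx P mP; apply: loc_D => //; exact: max_prime_ideal.
move=> h; rewrite -S_D; apply: LG; first exact: fracD.
move=> Q mQ; have [a [s [Da Ds ns ex]]] := h Q mQ.
have s0 := nP0 (max_prime_ideal mQ) ns.
exists s; split=> //; rewrite ex; have -> : s * (a / s) = a by field.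
exact: Da.
Qed.

Lemma nonunit_of_prime Q x : prime_ideal D Q -> x != 0 -> Q x -> ~ D x^-1.
Proof.
move=> pQ x0 Qx ix; have [smQ sQ nQ] := prime_props pQ.
apply: nQ; rewrite -(mulVf x0); exact: smM.
Qed.

Lemma height1_of_cond1 : cond1 -> forall P, maxs P ->
    forall Q, prime_ideal D Q -> nonzero_set Q -> subset_K Q P -> Q = P.
Proof.
move=> h1 P mP Q pQ [x [x0 Qx]] QP; have [smQ sQ nQ] := prime_props pQ.
have [s [hs es]] := h1 x (sQ x Qx) x0 (nonunit_of_prime pQ x0 Qx).
have [hs1 hs2 [smp sp fp]] := fac_props hs.
have [i hi IQ] : exists2 i, (i < size s)%N & subset_K (nth D s i) Q.
  apply: prime_prodI => //; first by move=> i hi; case: (hs2 i hi).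
  move=> y py; have : principal D x y by rewrite es; apply: S_ext.
  by case=> d [Dd ->]; apply: smM.
apply: seteq => y; split; first exact: QP.
move=> Py; case: (eqVneq y 0) => [->|y0]; first exact: sm0.
have [_ [_ t1]] := hs i hi.
have [n [n1 hn]] := t1 P mP (fun z h => QP z (IQ z h)) y Py y0.
have [_ _ sP _] := max_props mP.
apply: (prime_pow1 pQ (sP y Py) n1); apply: IQ; apply: hn; first by apply: DX; exact: sP.
by exists 1; split; [apply: loc_D; [exact: max_prime_ideal|exact: D1]|rewrite mulr1].
Qed.

Lemma locfin_of_cond1 : cond1 -> forall x, D x -> x != 0 -> exists (n : nat) (f : nat -> K -> Prop),
         forall P, maxs P -> P x -> exists i, (i < n)%N /\ P = f i.
Proof.
move=> h1 x Dx x0; case: (classic (D x^-1)) => ix.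
  exists 0%N, (fun _ => D) => P mP Px; exfalso.
  exact: (nonunit_of_prime (max_prime_ideal mP) x0 Px ix).
have [s [hs es]] := h1 x Dx x0 ix.
have [hs1 hs2 [smp sp fp]] := fac_props hs.
have hf : forall i, exists Pi : K -> Prop, forall P, maxs P -> subset_K (nth D s i) P ->
    (i < size s)%N -> P = Pi.
  move=> i; case: (classic (exists P0, maxs P0 /\ subset_K (nth D s i) P0 /\ (i < size s)%N)).
  - case=> P0 [mP0 [sP0 hi]]; exists P0 => P mP sP _.
    by have [[h _] _] := hs i hi; apply: homog_unique h mP mP0 sP sP0.
  - by move=> hn; exists D => P mP sP hi; exfalso; apply: hn; exists P.
exists (size s), (fun i => proj1_sig (constructive_indefinite_description _ (hf i))).
move=> P mP Px.
have [i hi IP] : exists2 i, (i < size s)%N & subset_K (nth D s i) P.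
  apply: prime_prodI; first exact: max_prime_ideal.
  - by move=> i hi; case: (hs2 i hi).
  - move=> y py; have : principal D x y by rewrite es; apply: S_ext.
    by case=> d [Dd ->]; apply: smM => //; exact: max_sm.
exists i; split=> //.
by case: (constructive_indefinite_description _ (hf i)) => Pi /= h; apply: h.
Qed.

Lemma GKD_of_cond1 : cond1 -> star_GKD D S.
Proof.
move=> h1; have h := height1_of_cond1 h1; split=> //; split.
- exact: val_of_cond1.
- exact: D_iff_loc.
- exact: locfin_of_cond1.
- move=> P Q mP mQ ne R pR nR [RP RQ]; apply: ne.
  by rewrite -(h P mP R pR nR RP) (h Q mQ R pR nR RQ).
Qed.


Section Conv.
Hypothesis HG : star_GKD D S.

Lemma gval P : maxs P -> forall z : K, z != 0 -> loc D P z \/ loc D P z^-1.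
Proof. by case: HG => [[h _ _ _] _]; apply: h. Qed.

Lemma ght P : maxs P -> forall Q, prime_ideal D Q -> nonzero_set Q -> subset_K Q P -> Q = P.
Proof. by case: HG => _ h; apply: h. Qed.

Lemma gcomp P a b : maxs P -> lm P a b \/ lm P b a.
Proof.
move=> mP; have pP := max_prime_ideal mP.
case: (eqVneq a 0) => [->|a0]; first by right; exact: lm_0.
case: (eqVneq b 0) => [->|b0]; first by left; exact: lm_0.
have ba0 : b / a != 0 by rewrite mulf_neq0 ?invr_eq0.
case: (gval mP ba0) => h.
- by left; exists (b / a); split=> //; field; rewrite ?a0 ?b0.
- by right; exists (b / a)^-1; split=> //; field; rewrite ?a0 ?b0.
Qed.

Lemma lm_notin P x z : prime_ideal D P -> P x -> D z -> ~ P z -> ~ lm P x z.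
Proof.
move=> pP Px Dz nz h; have [s [Ds ns [a [Da e]]]] := lm_den pP h Dz.
have [smP sP _] := prime_props pP.
apply: (prime_notmul pP Ds Dz ns nz); rewrite e; apply: smMr => //.
Qed.

Lemma radical P x c : maxs P -> P x -> x != 0 -> P c -> exists k : nat, lm P x (c ^+ k).
Proof.
move=> mP Px x0 Pc; have pP := max_prime_ideal mP.
have [fP SP sP nP] := max_props mP; have smP := frac_sm fP.
pose Q := fun y => D y /\ exists k : nat, lm P x (y ^+ k).
have smQ : sm Q.
  split.
  - by split; [exact: D0|exists 1%N; rewrite expr1; exact: lm_0].
  - move=> y1 y2 [D1' [k1 h1]] [D2' [k2 h2]]; split; first exact: DD.
    case: (gcomp y1 y2 mP) => [[t [lt e]]|[t [lt e]]].
    + exists k1; rewrite e -{1}(mulr1 y1) -mulrDr exprMn.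
      by apply: (lm_mulr pP) h1; apply: (loc_X pP); apply: (loc_add pP (loc_D pP D1) lt).
    + exists k2; rewrite e -{2}(mulr1 y2) -mulrDr addrC exprMn.
      by apply: (lm_mulr pP) h2; apply: (loc_X pP); apply: (loc_add pP (loc_D pP D1) lt).
  - move=> a y Da [Dy [k h]]; split; first exact: DM.
    by exists k; rewrite exprMn mulrC; apply: (lm_mulr pP) h; apply: (loc_X pP); apply: (loc_D pP).
have pQ : prime_ideal D Q.
  split=> //.
  - by move=> y [].
  - case=> _ [k h]; rewrite expr1n in h.
    by apply: (lm_notin pP Px D1 nP).
  - move=> a b Da Db [_ [k h]].
    case: (gcomp a b mP) => [[t [lt e]]|[t [lt e]]].
    + right; split=> //; exists (k + k)%N; rewrite exprD.
      have -> : b ^+ k * b ^+ k = (a * b) ^+ k * t ^+ k by rewrite e -!exprMn; congr (_ ^+ _); ring.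
      by apply: (lm_mulr pP) h; apply: (loc_X pP).
    + left; split=> //; exists (k + k)%N; rewrite exprD.
      have -> : a ^+ k * a ^+ k = (a * b) ^+ k * t ^+ k by rewrite e -!exprMn; congr (_ ^+ _); ring.
      by apply: (lm_mulr pP) h; apply: (loc_X pP).
have QP : subset_K Q P.
  move=> y [Dy [k h]]; have [s [Ds ns [a [Da e]]]] := lm_den pP h (DX k Dy).
  have Psy : P (s * y ^+ k) by rewrite e; apply: smMr => //; exact: sP.
  case: (prime_mul pP Ds (DX k Dy) Psy) => // Pyk.
  case: k {h e Psy} Pyk => [|k] Pyk; first by rewrite expr0 in Pyk.
  exact: (prime_pow1 pP Dy (isT : (1 <= k.+1)%N) Pyk).
have eQ := ght mP pQ (ex_intro _ x (conj x0 (conj (sP x Px) (ex_intro _ 1%N (eq_ind_r _ (lm_refl pP x) (expr1 x)))))) QP.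
have : Q c by rewrite eQ.
by case.
Qed.


Lemma maxlist x : D x -> x != 0 -> exists L : seq (K -> Prop),
  [/\ forall i, (i < size L)%N -> maxs (nth D L i) /\ nth D L i x,
      forall i j, (i < size L)%N -> (j < size L)%N -> i <> j -> nth D L i <> nth D L j
    & forall P, maxs P -> P x -> exists j, (j < size L)%N /\ P = nth D L j].
Proof.
move=> Dx x0; case: HG => [[_ _ lf _] _].
have [n [f hf]] := lf x Dx x0.
suff [L [h1 h2 h3]] : exists L : seq (K -> Prop),
  [/\ forall i, (i < size L)%N -> maxs (nth D L i) /\ nth D L i x,
      forall i j, (i < size L)%N -> (j < size L)%N -> i <> j -> nth D L i <> nth D L j
    & forall i, (i < n)%N -> maxs (f i) -> f i x -> exists j, (j < size L)%N /\ f i = nth D L j].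
  exists L; split=> // P mP Px; have [i [hi e]] := hf P mP Px; subst P.
  exact: h3 i hi mP Px.
elim: n {hf} => [|m [L [h1 h2 h3]]]; first by exists [::]; split.
case: (classic ([/\ maxs (f m), f m x & forall j, (j < size L)%N -> nth D L j <> f m])).
- case=> mf fx nf; exists (f m :: L); split.
  + by case=> [|i] /= hi; [split|apply: h1].
  + case=> [|i] [|j] //= hi hj hij.
    * by apply: nesym; apply: nf.
    * by apply: nf.
    * by apply: h2 => // e; apply: hij; rewrite e.
  + move=> i; rewrite ltnS leq_eqVlt => /orP [/eqP ->|hi] mi xi; first by exists 0%N.
    by have [j [hj e]] := h3 i hi mi xi; exists j.+1.
- move=> hn; exists L; split=> // i; rewrite ltnS leq_eqVlt => /orP [/eqP ->|hi] mi xi.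
  + apply: NNPP => hne; apply: hn; split=> // j hj e; apply: hne; exists j; split=> //.
  + exact: h3.
Qed.


Lemma den_gen P f l : prime_ideal D P -> (forall a, a \in l -> lm P f a) ->
  exists s, [/\ D s, ~ P s & forall y, gen D l y -> principal D f (s * y)].
Proof.
move=> pP; elim: l => [|a l IH] h.
  exists 1; split; [exact: D1|by case: pP|move=> y /= ->; rewrite mulr0; exact: sm0 (pr_sm f)].
have [s [Ds ns hs]] := IH (fun b hb => h b (mem_behead (s := a :: l) hb)).
have [t [[al [tau [Dal Dtau ntau ->]]] ea]] := h a (mem_head _ _).
have tau0 := nP0 pP ntau.
exists (tau * s); split; [exact: DM|exact: prime_notmul|].
move=> y /= [d [y' [Dd gy' ->]]]; have [d'' [Dd'' e'']] := hs y' gy'.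
exists (s * d * al + tau * d''); split.
- by apply: DD; apply: DM => //; apply: DM.
- rewrite ea; transitivity (s * d * al * f + tau * (s * y')).
    by field; rewrite tau0.
  by rewrite e''; ring.
Qed.

Lemma gen_nz (l : seq K) y : gen D l y -> y != 0 -> exists2 a, a \in l & a != 0.
Proof.
move=> gy y0; apply: NNPP => hn; apply/negP: y0; apply/negPn/eqP.
have smZ : sm (fun t : K => t = 0).
  by split=> //; [move=> a b -> ->; rewrite addr0|move=> a b _ ->; rewrite mulr0].
apply: (gen_sub smZ) gy => a ha; apply: NNPP => na; apply: hn; exists a => //; exact/eqP.
Qed.

Lemma min_gen P (l : seq K) : maxs P -> (exists2 a, a \in l & a != 0) ->
  exists f, [/\ f \in l, f != 0 & forall a, a \in l -> lm P f a].
Proof.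
move=> mP; have pP := max_prime_ideal mP; elim: l => [|a l IH] hn; first by case: hn.
case: (classic (exists2 b, b \in l & b != 0)) => hl.
- have [f [fl f0 hf]] := IH hl.
  case: (gcomp f a mP) => h.
  + exists f; split; [by rewrite in_cons fl orbT|done|].
    by move=> b; rewrite in_cons => /orP [/eqP ->|/hf].
  + case: (eqVneq a 0) => [a0|a0].
      exists f; split; [by rewrite in_cons fl orbT|done|].
      by move=> b; rewrite in_cons => /orP [/eqP ->|/hf]; [rewrite a0; exact: lm_0|].
    exists a; split; [exact: mem_head|done|].
    move=> b; rewrite in_cons => /orP [/eqP ->|/hf hb]; first exact: lm_refl.
    exact: (lm_trans pP h hb).
- case: hn => b; rewrite in_cons => /orP [/eqP ->|hb] b0; last by exfalso; apply: hl; exists b.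
  exists a; split; [exact: mem_head|done|].
  move=> c; rewrite in_cons => /orP [/eqP ->|hc]; first exact: lm_refl.
  have -> : c = 0 by apply: NNPP => /eqP c0; apply: hl; exists c.
  exact: lm_0.
Qed.

Lemma PMD J : finite_type D S J -> star_invertible D S J.
Proof.
move=> [[fJ SJ] [F [fF [l eF] eJ]]]; subst J F.
have fSF := S_frac fF.
have fM : frac (mulI (S (gen D l)) (inv_ideal D (S (gen D l)))).
  apply: frac_int.
  - exact/mulI_sm/frac_sm.
  - apply: mulI_sub; first exact: smDD.
    by move=> a b Sa hb; rewrite mulrC; apply: hb.
  - have [a [a0 Aa]] := nz_frac fSF.
    case: fSF => _ _ [d [Dd d0 hd]]; exists (a * d); split; first exact: mulf_neq0.
    by apply: mulI_el.
apply: one_D; [exact/S_sm|apply: S_int => //; apply: mulI_sub; [exact: smDD|]|].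
  by move=> a b Sa hb; rewrite mulrC; apply: hb.
apply: LG => // Q mQ; have pQ := max_prime_ideal mQ.
have [y [y0 gy]] := nz_frac fF.
have [f [fl f0 hf]] := min_gen mQ (gen_nz gy y0).
have [s [Ds ns hs]] := den_gen pQ hf.
have s0 := nP0 pQ ns.
exists s; split=> //; rewrite mulr1.
have -> : s = f * (s / f) by field; rewrite f0.
apply: (mulI_el (S_ext fF (gen_mem fl))).
have g0 : s / f != 0 by rewrite mulf_neq0 ?invr_eq0.
move=> z; apply: (S_gmul g0 fF fracD S_D) => w gw.
have [d [Dd e]] := hs w gw.
by have -> : s / f * w = d by rewrite mulrAC e; field; rewrite f0.
Qed.


Section Fac.
Variable x : K.
Hypothesis Dx : D x.
Hypothesis x0 : x != 0.
Variable L : seq (K -> Prop).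
Hypothesis hL1 : forall i, (i < size L)%N -> maxs (nth D L i) /\ nth D L i x.
Hypothesis hL2 : forall i j, (i < size L)%N -> (j < size L)%N -> i <> j -> nth D L i <> nth D L j.
Hypothesis hL3 : forall P, maxs P -> P x -> exists j, (j < size L)%N /\ P = nth D L j.

Local Notation m := (size L).
Local Notation Pn i := (nth D L i).

Lemma e_ex i j : exists c, [/\ D c, (i < m)%N -> lm (Pn i) x c &
   (i < m)%N -> (j < m)%N -> j <> i -> ~ Pn j c].
Proof.
case: (classic ([/\ (i < m)%N, (j < m)%N & j <> i])) => [[hi hj ne]|hn].
- have [mi xi] := hL1 hi; have [mj xj] := hL1 hj.
  have [c0 [Pc0 nc0]] := max_notsub mi mj (hL2 hi hj (nesym ne)).
  have [_ _ si _] := max_props mi.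
  have [k hk] := radical mi xi x0 Pc0.
  exists (c0 ^+ k); split.
  + by apply: DX; exact: si.
  + by move=> _; exact: hk.
  + by move=> _ _ _; exact: (@prime_pow _ c0 k (max_prime_ideal mj) (si _ Pc0) nc0).
- exists x; split.
  + exact: Dx.
  + by move=> hi; apply: lm_refl; exact: max_prime_ideal (proj1 (hL1 hi)).
  + by move=> hi hj ne; exfalso; apply: hn.
Qed.

Definition ee i j := proj1_sig (constructive_indefinite_description _ (e_ex i j)).

Lemma ee_props i j : [/\ D (ee i j), (i < m)%N -> lm (Pn i) x (ee i j) &
   (i < m)%N -> (j < m)%N -> j <> i -> ~ Pn j (ee i j)].
Proof. by rewrite /ee; case: (constructive_indefinite_description _ (e_ex i j)). Qed.

Definition gl i := x :: [seq ee i j | j <- iota 0 m].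
Definition JJ i := gen D (gl i).
Definition II i := S (JJ i).

Lemma gl_D i a : a \in gl i -> D a.
Proof. by rewrite in_cons => /orP [/eqP ->|/mapP [j _ ->]] //; case: (ee_props i j). Qed.

Lemma gl_lm i a : (i < m)%N -> a \in gl i -> lm (Pn i) x a.
Proof.
move=> hi; have pP := max_prime_ideal (proj1 (hL1 hi)).
rewrite in_cons => /orP [/eqP ->|/mapP [j _ ->]]; first exact: lm_refl.
by case: (ee_props i j) => _ /(_ hi).
Qed.

Lemma JJ_x i : JJ i x. Proof. by apply: gen_mem; exact: mem_head. Qed.
Lemma JJ_e i j : (j < m)%N -> JJ i (ee i j).
Proof. by move=> hj; apply: gen_mem; rewrite in_cons; apply/orP; right; apply: map_f; rewrite mem_iota. Qed.

Lemma fJJ i : frac (JJ i).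
Proof. apply: gen_frac; [exact: gl_D|exists x; split=> //; exact: JJ_x]. Qed.

Lemma JJ_II i : subset_K (JJ i) (II i). Proof. exact: S_ext (fJJ i). Qed.

Lemma II_int i : subset_K (II i) D.
Proof. apply: S_int; [exact: fJJ|apply: gen_int; exact: gl_D]. Qed.

Lemma II_den i : (i < m)%N -> exists s, [/\ D s, ~ Pn i s & forall y, II i y -> principal D x (s * y)].
Proof.
move=> hi; have pP := max_prime_ideal (proj1 (hL1 hi)).
have [s [Ds ns hs]] := den_gen pP (fun a => @gl_lm i a hi).
exists s; split=> //; have s0 := nP0 pP ns.
by apply: (S_gmul s0 (fJJ i) (pr_frac Dx x0) (pr_S Dx x0)).
Qed.

Lemma II_only i X : (i < m)%N -> maxs X -> subset_K (II i) X -> X = Pn i.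
Proof.
move=> hi mX sX; have [j [hj e]] := hL3 mX (sX _ (JJ_II (JJ_x i))).
case: (eqVneq j i) => [eji|nji]; first by rewrite e eji.
have nji' : j <> i by apply/eqP.
exfalso; case: (ee_props i j) => _ _ /(_ hi hj nji') h; apply: h.
by rewrite -e; apply: sX; apply: JJ_II; apply: JJ_e.
Qed.

Lemma II_out i Q : (i < m)%N -> maxs Q -> Q <> Pn i -> exists g, [/\ D g, ~ Q g & JJ i g].
Proof.
move=> hi mQ ne; case: (classic (Q x)) => Qx; last by exists x; split=> //; exact: JJ_x.
have [j [hj e]] := hL3 mQ Qx.
have nji : j <> i by move=> eji; apply: ne; rewrite e eji.
exists (ee i j); split; [by case: (ee_props i j)| |exact: JJ_e].
by rewrite e; case: (ee_props i j) => _ _; apply.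
Qed.

Lemma II_not1 i : (i < m)%N -> ~ II i 1.
Proof.
move=> hi I1; have [mi xi] := hL1 hi; have pP := max_prime_ideal mi.
have [s [Ds ns hs]] := II_den hi; have [d [Dd e]] := hs 1 I1.
apply: ns; rewrite -(mulr1 s) e; have [smP _ _] := prime_props pP; exact: smM.
Qed.

Lemma II_pis i : (i < m)%N -> proper_integral_star_ideal D S (II i).
Proof. move=> hi; apply: pis_of; [exact: S_frac (fJJ i)|exact: S_idem (fJJ i)|exact: II_int|exact: II_not1]. Qed.

Lemma II_ssh i : (i < m)%N -> star_super_homog_type1 D S (II i).
Proof.
move=> hi; have [mi xi] := hL1 hi; have pP := max_prime_ideal mi.
have [fP SP sP nP] := max_props mi.
have hom : star_homog D S (II i).
  split; [exact: II_pis|exact: ft_gen (fJJ i)|].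
  move=> A B pA _ pB _ IA IB.
  have [fA SA sA nA] := pis_props pA; have [fB SB sB nB] := pis_props pB.
  have [QA [mQA AQA]] := ZornMax fA SA sA nA.
  have [QB [mQB BQB]] := ZornMax fB SB sB nB.
  have eA := II_only hi mQA (fun y h => AQA y (IA y h)).
  have eB := II_only hi mQB (fun y h => BQB y (IB y h)).
  subst QA QB => eD; apply: nP.
  have fAB : frac (sumI A B) by apply: sumI_frac => //; exact: frac_sm.
  rewrite -SP; apply: (S_mono fAB fP); last by rewrite eD; exact: D1.
  by move=> _ [a [b [Aa Bb ->]]]; apply: smD (frac_sm fP) (AQA a Aa) (BQB b Bb).
split; first by split=> // J fJ _; apply: PMD.
split=> // M mM IM y My y0.
have eM := II_only hi mM IM; subst M.
have [k hk] := radical mi xi x0 My.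
exists k.+1; split=> // z Dz [t [lt ez]].
have lz : lm (Pn i) x z.
  apply: (lm_trans pP hk); exists (y * t); split; last by rewrite ez exprS mulrCA mulrA.
  by apply: loc_mul => //; apply: loc_D => //; exact: sP.
apply: LG; first exact: fJJ.
move=> Q mQ; case: (classic (Q = Pn i)) => [->|ne].
- have [s [Ds ns [a [Da e]]]] := lm_den pP lz Dz.
  exists s; split=> //; rewrite e; apply: smMr; [exact: gen_sm|exact: Da|exact: JJ_x].
- have [g [Dg ng Jg]] := II_out hi mQ ne.
  by exists g; split=> //; apply: smMr => //; exact: gen_sm.
Qed.


Lemma smC g (A : K -> Prop) : sm A -> sm (fun t => A (g * t)).
Proof.
move=> hA; split; first by rewrite mulr0; exact: sm0.
- by move=> u v hu hv; rewrite mulrDr; apply: smD.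
- by move=> a u Da hu; rewrite mulrCA; apply: smM.
Qed.

Local Notation PR a n := (prodI D [seq II k | k <- iota a n]).

Lemma PR_props a n : [/\ sm (PR a n), subset_K (PR a n) D & frac (PR a n)].
Proof.
elim: n a => [|n IH] a /=; first by split=> //; [exact: smDD|exact: fracD].
have [h1 h2 h3] := IH a.+1.
split; [exact/mulI_sm/S_sm/fJJ|exact: mulI_int (@II_int a) h2|].
by apply: mulI_frac => //; [exact: S_frac (fJJ a)|exact: II_int].
Qed.

Lemma PR_x a n : PR a n (x ^+ n).
Proof.
elim: n a => [|n IH] a /=; first by rewrite expr0; exact: D1.
by rewrite exprS; apply: mulI_el; [exact: JJ_II (JJ_x a)|exact: IH].
Qed.

Lemma PR_avoid j a n : (j < m)%N -> (a + n <= m)%N -> (j < a)%N ->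
  exists s, [/\ D s, ~ Pn j s & PR a n s].
Proof.
move=> hj; have [_ _ _ nP] := max_props (proj1 (hL1 hj)).
elim: n a => [|n IH] a han hja /=.
  by exists 1; split; [exact: D1|exact: nP|exact: D1].
have han' : (a.+1 + n <= m)%N by rewrite addSnnS.
have [s [Ds ns ps]] := IH a.+1 han' (ltnW hja).
have ha : (a < m)%N by lia.
have [De _ ne] := ee_props a j.
exists (ee a j * s); split; [exact: DM| |].
- apply: prime_notmul => //; first exact: max_prime_ideal (proj1 (hL1 hj)).
  by apply: ne => // eja; rewrite eja ltnn in hja.
- by apply: mulI_el => //; apply: JJ_II; apply: JJ_e.
Qed.

Lemma PR_at j a n : (j < m)%N -> (a + n <= m)%N -> (a <= j)%N -> (j < a + n)%N ->
  exists s, [/\ D s, ~ Pn j s & PR a n (s * x)].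
Proof.
move=> hj; elim: n a => [|n IH] a han haj hjn; first by rewrite addn0 ltnNge haj in hjn.
have pj := max_prime_ideal (proj1 (hL1 hj)).
have han' : (a.+1 + n <= m)%N by rewrite addSnnS.
case: (eqVneq a j) => [eaj|naj].
- subst a; have [s [Ds ns ps]] := PR_avoid hj han' (ltnSn j).
  exists s; split=> //=; rewrite mulrC; apply: mulI_el => //; exact: JJ_II (JJ_x j).
- have haj' : (a.+1 <= j)%N by rewrite ltn_neqAle naj haj.
  have [s [Ds ns ps]] := IH a.+1 han' haj' ltac:(lia).
  have ha : (a < m)%N by lia.
  have [De _ ne] := ee_props a j.
  exists (ee a j * s); split; [exact: DM| |].
  + apply: prime_notmul => //; by apply: ne => // eja; rewrite eja eqxx in naj.
  + by rewrite -mulrA /=; apply: mulI_el => //; apply: JJ_II; apply: JJ_e.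
Qed.

Lemma PR_den j a n : (j < m)%N -> (a + n <= m)%N -> (a <= j)%N -> (j < a + n)%N ->
  exists s, [/\ D s, ~ Pn j s & forall y, PR a n y -> principal D x (s * y)].
Proof.
move=> hj; elim: n a => [|n IH] a han haj hjn; first by rewrite addn0 ltnNge haj in hjn.
have han' : (a.+1 + n <= m)%N by rewrite addSnnS.
have [h1 h2 h3] := PR_props a.+1 n.
case: (eqVneq a j) => [eaj|naj].
- subst a; have [s [Ds ns hs]] := II_den hj.
  exists s; split=> //=; apply: (mulI_sub (C := fun t => principal D x (s * t))); first exact: smC (pr_sm x).
  move=> u v Iu pv; rewrite mulrA; apply: smMr; [exact: pr_sm|exact: (h2 v pv)|exact: (hs u Iu)].
- have haj' : (a.+1 <= j)%N by rewrite ltn_neqAle naj haj.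
  have [s [Ds ns hs]] := IH a.+1 han' haj' ltac:(lia).
  exists s; split=> //=; apply: (mulI_sub (C := fun t => principal D x (s * t))); first exact: smC (pr_sm x).
  move=> u v Iu pv; rewrite mulrCA; apply: smM; [exact: pr_sm|exact: (II_int Iu)|exact: (hs v pv)].
Qed.

Lemma fac_eq : principal D x = S (PR 0 m).
Proof.
have [smp sp fp] := PR_props 0 m.
apply: seteq => y; split.
- case=> d [Dd ->]; apply: smM; [exact: S_sm|done|].
  apply: LG => // Q mQ; case: (classic (Q x)) => Qx.
  + have [j [hj e]] := hL3 mQ Qx; subst Q.
    by apply: (PR_at hj) => //; rewrite add0n.
  + exists (x ^+ m); split; [exact: DX|exact: prime_pow (max_prime_ideal mQ) Dx Qx|].
    by apply: smMr => //; exact: PR_x.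
- rewrite -(pr_S Dx x0); apply: S_mono => //; first exact: pr_frac.
  move=> z pz; rewrite -(pr_S Dx x0); apply: LG; first exact: pr_frac.
  move=> Q mQ; case: (classic (Q x)) => Qx.
  + have [j [hj e]] := hL3 mQ Qx; subst Q.
    have [s [Ds ns hs]] := PR_den (a := 0) (n := m) hj (leqnn _) (leq0n _) hj.
    by exists s; split=> //; apply: hs.
  + exists x; split=> //; exists z; split; [exact: sp|by rewrite mulrC].
Qed.

End Fac.

Lemma cond1_of_GKD : cond1.
Proof.
move=> x Dx x0 _.
have [L [h1 h2 h3]] := maxlist Dx x0.
exists [seq II Dx x0 h1 h2 k | k <- iota 0 (size L)]; split; last exact: (fac_eq Dx x0 h1 h2 h3).
move=> i; rewrite size_map size_iota => hi.
rewrite (nth_map 0%N) ?size_iota // nth_iota // add0n.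
exact: (II_ssh Dx x0 h1 h2 h3).
Qed.

End Conv.

Theorem main_equiv : cond1 <-> star_GKD D S.
Proof. split; [exact: GKD_of_cond1|exact: cond1_of_GKD]. Qed.

End Q5.

Unset Implicit Arguments.

Theorem propositionQ5 (K : fieldType) (D : K -> Prop)
  (star : (K -> Prop) -> (K -> Prop)) :
  is_subring D -> is_frac_field D ->
  is_star_op D star -> finite_character D star ->
  ((forall x : K, D x -> x != 0 -> ~ D x^-1 ->
      exists s : seq (K -> Prop),
        (forall i : nat, (i < size s)%N -> star_super_homog_type1 D star (nth D s i)) /\
        principal D x = star (prodI D s))
   <-> star_GKD D star).
Proof.
move=> HD HF HS HFC; exact: (main_equiv HD HF HS HFC).
Qed.
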